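(* Let $G$ be a distance-regular graph of diameter $d$ admitting a distance magic labeling $l$. If $D$ is a non-empty subset of $\{0,1,\dots,d\}$, then $l$ is either a $D$-magic labeling or an $(\alpha,\delta)$-$D$-antimagic labeling of $G$ for some $\alpha,\delta$. Moreover, if $G$ is bipartite, then $l$ is a $D$-magic labeling for every non-empty $D\subseteq\{1,3,5,\dots\}$.
   Context: A connected graph $G$ of diameter $d$ is distance-regular if there are non-negative integers $b_i,c_i$ ($0\le i\le d$) such that for any two vertices $x,y$ at distance $i$, $y$ has exactly $c_i$ neighbours at distance $i-1$ from $x$ and exactly $b_i$ neighbours at distance $i+1$ from $x$. $G_i(x)$ is the set of vertices at distance $i$ from $x$, and for a set of distances $D$, $N_D(x)=\bigcup_{i\in D}G_i(x)$. For $G$ of order $N$ and a bijection $f:V(G)\to\{1,\dots,N\}$, the weight of $x$ is $w(x)=\sum_{y\in N_D(x)}f(y)$. $f$ is $D$-magic if $w(x)$ is constant; it is $(\alpha,\delta)$-$D$-antimagic if the weights are pairwise distinct and the set $\{w(x):x\in V(G)\}$ is an arithmetic progression starting at $\alpha$ with common difference $\delta>0$. A distance magic labeling is a $\{1\}$-magic labeling. *)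

(* Defs.v *)
From mathcomp Require Import all_boot.
Set Implicit Arguments. Unset Strict Implicit. Unset Printing Implicit Defensive.

Section Graphs.
Variable T : finType.
Variable e : rel T.

Definition simple_graph : Prop := symmetric e /\ irreflexive e.

Definition connected_graph : Prop := forall x y : T, connect e x y.

Definition ball (x : T) (n : nat) : {set T} :=
  iter n (fun S => S :|: [set y | [exists z in S, e z y]]) [set x].

(* graph distance (= #|T| if y unreachable from x; irrelevant for connected graphs) *)
Definition dist (x y : T) : nat := find (fun n => y \in ball x n) (iota 0 #|T|).

Definition diameter : nat := \max_(x : T) \max_(y : T) dist x y.

Definition layer (x : T) (i : nat) : {set T} := [set y | dist x y == i].

Definition distance_regular : Prop :=
  simple_graph /\ connected_graph /\
  exists b c : nat -> nat, forall x y : T,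
    #|[set z | e y z & (dist x z).+1 == dist x y]| = c (dist x y) /\
    #|[set z | e y z & dist x z == (dist x y).+1]| = b (dist x y).

Definition bipartite : Prop :=
  exists A : {set T}, forall x y, e x y -> (x \in A) != (y \in A).

Definition labeling (f : T -> nat) : Prop :=
  injective f /\ forall x, 1 <= f x <= #|T|.

Definition weight (D : pred nat) (f : T -> nat) (x : T) : nat :=
  \sum_(y : T | D (dist x y)) f y.

Definition D_magic (D : pred nat) (f : T -> nat) : Prop :=
  labeling f /\ exists k, forall x, weight D f x = k.

Definition D_antimagic (D : pred nat) (f : T -> nat) (alpha delta : nat) : Prop :=
  labeling f /\ 0 < delta /\ injective (weight D f) /\
  forall n, (exists x, weight D f x = n) <-> (exists2 i, i < #|T| & n = alpha + i * delta).

Definition distance_magic (f : T -> nat) : Prop := D_magic (pred1 1) f.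

End Graphs.

(* Main.v *)
Require Import Defs.
From mathcomp Require Import all_boot all_order all_algebra.
From mathcomp Require Import zify ring lra.
Set Warnings "-notation-overridden -ambiguous-paths".
Set Implicit Arguments. Unset Strict Implicit. Unset Printing Implicit Defensive.
Import Order.TTheory GRing.Theory Num.Theory.

Section Dist.
Context (T : finType) (e : rel T).
Context (sym : symmetric e) (irr : irreflexive e) (conn : connected_graph e).

Lemma ballS x n : ball e x n.+1 = ball e x n :|: [set y | [exists z in ball e x n, e z y]].
Proof. by []. Qed.

Lemma ball0 x : ball e x 0 = [set x].
Proof. by []. Qed.

Lemma ball_mono x n m : n <= m -> ball e x n \subset ball e x m.
Proof.
elim: m => [|m IH]; first by rewrite leqn0 => /eqP->.
rewrite leq_eqVlt => /orP[/eqP->|/IH H]; first exact: subxx.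
by apply: (subset_trans H); rewrite ballS subsetUl.
Qed.

Lemma path_ball x p : path e x p -> last x p \in ball e x (size p).
Proof.
elim/last_ind: p => [|q z IH]; first by rewrite /= /ball /= set11.
rewrite rcons_path last_rcons size_rcons => /andP[/IH Hq Hz].
rewrite ballS !inE; apply/orP; right; apply/existsP; exists (last x q).
by rewrite Hq.
Qed.

Lemma reach x y : exists2 n, n < #|T| & y \in ball e x n.
Proof.
have /connectP[p pP ->] := conn x y.
case: (shortenP pP) => p' p'P up' _.
exists (size p'); last exact: path_ball.
move/card_uniqP: up' => /= H.
have := max_card (mem (x :: p')). by rewrite H.
Qed.

Lemma dist_ball x y : y \in ball e x (dist e x y).
Proof.
have [n nlt yn] := reach x y.
have hs : has (fun n => y \in ball e x n) (iota 0 #|T|).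
  by apply/hasP; exists n => //; rewrite mem_iota.
have := nth_find 0 hs. rewrite has_find size_iota in hs.
by rewrite nth_iota.
Qed.

Lemma dist_lt x y : dist e x y < #|T|.
Proof.
have [n nlt yn] := reach x y.
have hs : has (fun n => y \in ball e x n) (iota 0 #|T|).
  by apply/hasP; exists n => //; rewrite mem_iota.
by rewrite has_find size_iota in hs.
Qed.

Lemma dist_min x y n : y \in ball e x n -> dist e x y <= n.
Proof.
move=> yn; rewrite leqNgt; apply/negP => lt.
have := @before_find _ 0 (fun k => y \in ball e x k) (iota 0 #|T|) n lt.
rewrite nth_iota; last exact: ltn_trans lt (dist_lt x y).
by rewrite add0n yn.
Qed.

Lemma dist_le x y n : (dist e x y <= n) = (y \in ball e x n).
Proof.
apply/idP/idP; last exact: dist_min.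
by move=> H; apply: (subsetP (ball_mono x H)); apply: dist_ball.
Qed.

Lemma dist_xx x : dist e x x = 0.
Proof. by apply/eqP; rewrite -leqn0 dist_le /ball /= set11. Qed.

Lemma dist0 x y : dist e x y = 0 -> y = x.
Proof. by move=> H; have := dist_ball x y; rewrite H /ball /= inE => /eqP. Qed.

Lemma dist_adj x y z : e y z -> dist e x z <= (dist e x y).+1.
Proof.
move=> yz; rewrite dist_le ballS !inE; apply/orP; right; apply/existsP.
by exists y; rewrite dist_ball.
Qed.

Lemma dist_adj' x y z : e y z -> dist e x y <= (dist e x z).+1.
Proof. by rewrite sym; apply: dist_adj. Qed.

Lemma dist_pred x y n : dist e x y = n.+1 -> exists2 z, e z y & dist e x z = n.
Proof.
move=> H; have := dist_ball x y; rewrite H ballS !inE => /orP[|].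
  by rewrite -dist_le H ltnn.
case/existsP => z /andP[zb zy]; exists z => //.
apply/eqP; rewrite eqn_leq dist_le zb /=.
by have := dist_adj x zy; rewrite H ltnS.
Qed.

Lemma dist1 x y : (dist e x y == 1) = e x y.
Proof.
apply/idP/idP.
  by move/eqP/dist_pred => [z zy /dist0 zx]; rewrite -zx.
move=> xy; rewrite eqn_leq; have := dist_adj x xy; rewrite dist_xx => -> /=.
rewrite lt0n; apply/negP => /eqP /dist0 yx.
by move: xy; rewrite yx irr.
Qed.


Lemma cardb (P : pred T) : #|[set y | P y]| = \sum_y (P y : nat).
Proof.
rewrite -sum1_card big_mkcond /=; apply: eq_bigr => y _.
by rewrite inE; case: (P y).
Qed.

Context (b c : nat -> nat).
Context (hbc : forall x y : T,
    #|[set z | e y z & (dist e x z).+1 == dist e x y]| = c (dist e x y) /\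
    #|[set z | e y z & dist e x z == (dist e x y).+1]| = b (dist e x y)).

Definition deg z := #|[set y | e z y]|.

Lemma deg_b0 z : deg z = b 0.
Proof.
have [_ H] := hbc z z; rewrite dist_xx in H; rewrite -H; apply: eq_card => y.
by rewrite !inE dist1 andbb.
Qed.

Definition acoef i := b 0 - c i - b i.

Lemma Ncount x z i : #|[set y | e z y & dist e x y == i]| =
  if dist e x z == i.+1 then c i.+1 else if dist e x z == i then acoef i
  else if (dist e x z).+1 == i then b (dist e x z) else 0.
Proof.
have [hc hb] := hbc x z.
set j := dist e x z in hc hb *.
have nb : forall y, e z y -> (dist e x y <= j.+1) && (j <= (dist e x y).+1).
  by move=> y zy; rewrite dist_adj // dist_adj'.
case: (eqVneq j i.+1) => [ji|ji].
  rewrite -ji -hc; apply: eq_card => y; rewrite !inE ji eqSS //.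
case: (eqVneq j i) => [ji'|ji'].
  rewrite /acoef -(deg_b0 z) /deg -ji' -hc -hb !cardb.
  have -> : \sum_y (e z y : nat) = \sum_y (((e z y && ((dist e x y).+1 == j)) : nat)
     + ((e z y && (dist e x y == j)) : nat) + ((e z y && (dist e x y == j.+1)) : nat)).
    apply: eq_bigr => y _; case zy: (e z y) => //=.
    have := nb y zy; case: eqP; case: eqP; case: eqP => /=; lia.
  rewrite !big_split /=; lia.
case: (eqVneq j.+1 i) => [ji''|ji''].
  rewrite -hb; apply: eq_card => y; rewrite !inE ji'' //.
apply: eq_card0 => y; rewrite !inE; apply/negP => /andP[zy /eqP dy].
have := nb y zy; rewrite dy; lia.
Qed.


Local Open Scope ring_scope.

Definition S (f : T -> rat) i x : rat := \sum_(y | dist e x y == i) f y.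

Lemma S0 f x : S f 0 x = f x.
Proof.
rewrite /S (big_pred1 x) // => y /=; apply/eqP/eqP => [/dist0 //|->].
exact: dist_xx.
Qed.

Lemma rec f i x : S (fun y => S f 1 y) i x =
  (c i.+1)%:R * S f i.+1 x + (acoef i)%:R * S f i x
  + (b i.-1)%:R * \sum_(z | (dist e x z).+1 == i) f z.
Proof.
rewrite /S.
have -> : \sum_(y | dist e x y == i) \sum_(z | dist e y z == 1) f z =
    \sum_y \sum_z (if (dist e x y == i) && e y z then f z else 0).
  rewrite big_mkcond; apply: eq_bigr => y _; case: ifP => _ /=.
    by rewrite big_mkcond; apply: eq_bigr => z _; rewrite dist1.
  by rewrite big1.
rewrite exchange_big /= !mulr_sumr (big_mkcond (fun y => dist e x y == i.+1))
  (big_mkcond (fun y => dist e x y == i)) (big_mkcond (fun y => (dist e x y).+1 == i)).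
rewrite -!big_split /=.
apply: eq_bigr => z _.
have -> : \sum_y (if (dist e x y == i) && e y z then f z else 0) =
    (#|[set y | e z y & dist e x y == i]|)%:R * f z.
  rewrite cardb natr_sum mulr_suml; apply: eq_bigr => y _.
  by rewrite sym andbC; case: (_ && _); rewrite /= ?mul1r ?mul0r.
rewrite Ncount.
set j := dist e x z.
case E1: (j == i.+1); case E2: (j == i); case E3: (j.+1 == i); rewrite /= ?addr0 ?add0r;
  try (exfalso; move: E1 E2 E3; lia).
all: try by [].
- by rewrite -(eqP E3).
- by rewrite mul0r.
Qed.



Lemma Sempty f i x : c i.+1 = 0%N -> S f i.+1 x = 0.
Proof.
move=> c0; rewrite /S big1 // => y /eqP dy.
have [z zy dz] := dist_pred dy.
have [hc _] := hbc x y; rewrite dy c0 in hc.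
have := card0_eq hc z; rewrite !inE sym zy dz eqxx //.
Qed.

Lemma S_ext f g i x : (forall y, f y = g y) -> S f i x = S g i x.
Proof. by move=> H; apply: eq_bigr => y _; rewrite H. Qed.

Lemma S_lin a d g h i x :
  S (fun y => a * g y - d * h y) i x = a * S g i x - d * S h i x.
Proof. by rewrite /S big_split /= sumrN !mulr_sumr. Qed.

Lemma S_scale a g i x : S (fun y => a * g y) i x = a * S g i x.
Proof. by rewrite /S mulr_sumr. Qed.

Lemma S_pred f n x : \sum_(z | (dist e x z).+1 == n.+1) f z = S f n x.
Proof. by apply: eq_bigl => z; rewrite eqSS. Qed.

Lemma gen f lam : (forall x, S f 1 x = lam * f x) ->
  forall n, exists t0, exists t1, forall x, S f n x = t0 * f x /\ S f n.+1 x = t1 * f x.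
Proof.
move=> H1; elim=> [|n [t0 [t1 IH]]].
  by exists 1, lam => x; rewrite S0 mul1r H1.
case: (eqVneq (c n.+2) 0%N) => [c0|cn0].
  exists t1, 0 => x; split; first by case: (IH x).
  by rewrite Sempty // mul0r.
exists t1, ((lam * t1 - (acoef n.+1)%:R * t1 - (b n)%:R * t0) / (c n.+2)%:R) => x.
split; first by case: (IH x).
have := rec f n.+1 x.
rewrite (S_ext _ _ H1) S_scale S_pred /=.
case: (IH x) => -> ->.
have cn : (c n.+2)%:R != 0 :> rat by rewrite pnatr_eq0.
set Q := S f n.+2 x => E.
have -> : Q = ((c n.+2)%:R * Q) / (c n.+2)%:R by rewrite [_ * Q]mulrC mulfK.
have -> : (c n.+2)%:R * Q = lam * (t1 * f x) - (acoef n.+1)%:R * (t1 * f x) - (b n)%:R * (t0 * f x).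
  by rewrite E; ring.
ring.
Qed.


Context (l : T -> nat) (m : nat) (hm : forall x, weight e (pred1 1%N) l x = m).

Definition lr y : rat := (l y)%:R.
Definition one (y : T) : rat := 1.
Definition u y : rat := (b 0)%:R * lr y - m%:R * one y.

Lemma S_one i x : S one i x = (#|[set y | dist e x y == i]|)%:R.
Proof.
rewrite cardb natr_sum /S big_mkcond; apply: eq_bigr => y _.
by case: (_ == _).
Qed.

Lemma S_one1 x : S one 1 x = (b 0)%:R.
Proof.
rewrite S_one -(deg_b0 x) /deg; congr (_%:R); apply: eq_card => y.
by rewrite !inE dist1.
Qed.

Lemma S_lr1 x : S lr 1 x = m%:R.
Proof. by rewrite -(hm x) /weight natr_sum. Qed.

Lemma S_u1 x : S u 1 x = 0.
Proof. by rewrite S_lin S_lr1 S_one1 mulrC subrr. Qed.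

Lemma S_u_one i x : S u i x = (b 0)%:R * S lr i x - m%:R * S one i x.
Proof. exact: S_lin. Qed.

Lemma linear_form : b 0 != 0%N -> forall i, exists s, exists C, forall x, S lr i x = s * lr x + C.
Proof.
move=> k0 i.
have [t0 [t1 Hu]] := gen (f := u) (lam := 0) (fun x => etrans (S_u1 x) (esym (mul0r _))) i.
have [t0' [t1' Ho]] := gen (f := one) (lam := (b 0)%:R) (fun x => etrans (S_one1 x) (esym (mulr1 _))) i.
have kn : (b 0)%:R != 0 :> rat by rewrite pnatr_eq0.
exists t0, ((m%:R * t0' - t0 * m%:R) / (b 0)%:R) => x.
have [E1 _] := Hu x; have [E2 _] := Ho x.
rewrite S_u_one E2 /u /one in E1.
apply: (mulfI kn).
have -> : (b 0)%:R * S lr i x = t0 * ((b 0)%:R * lr x - m%:R * 1) + m%:R * (t0' * 1).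
  by rewrite -E1; ring.
by field.
Qed.


Section Bip.
Context (A : {set T}) (hA : forall x y, e x y -> (x \in A) != (y \in A)).

Lemma parity x y : (y \in A) = (x \in A) (+) odd (dist e x y).
Proof.
move: {2}(dist e x y) (erefl (dist e x y)) => n; elim: n y => [|n IH] y dy.
  by rewrite (dist0 dy) dist_xx /= addbF.
have [z zy dz] := dist_pred dy.
have := hA zy; rewrite (IH z dz) ?dy /=.
by rewrite dz; case: (y \in A); case: (x \in A); case: (odd n).
Qed.

Lemma acoef_S f i x : (acoef i)%:R * S f i x = 0.
Proof.
case: (pickP (fun z => dist e x z == i)) => [z /eqP dz|none]; last first.
  by rewrite /S big_pred0 ?mulr0.
have := Ncount x z i; rewrite dz eqxx (ltn_eqF (ltnSn i)) /= => <-.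
suff -> : #|[set y | e z y & dist e x y == i]| = 0%N by rewrite mul0r.
apply: eq_card0 => y; rewrite !inE; apply/negP => /andP[zy /eqP dy].
have := hA zy; rewrite (parity x y) (parity x z) dy dz.
by case: (x \in A); case: (odd i).
Qed.

Lemma odd_zero n x : S u n.*2.+1 x = 0.
Proof.
elim: n x => [|n IH] x; first exact: S_u1.
have := rec u n.*2.+2 x.
rewrite (S_ext _ _ (fun y => S_u1 y)) acoef_S addr0 S_pred IH mulr0 addr0.
have -> : S (fun _ => 0) n.*2.+2 x = 0 by rewrite /S big1.
move/esym/eqP; rewrite mulf_eq0 pnatr_eq0 => /orP[/eqP c0|/eqP //].
by rewrite doubleS; apply: Sempty.
Qed.

Lemma odd_const : b 0 != 0%N -> forall i, odd i -> exists C, forall x, S lr i x = C.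
Proof.
move=> k0 i oi.
have [t0' [t1' Ho]] := gen (f := one) (lam := (b 0)%:R) (fun x => etrans (S_one1 x) (esym (mulr1 _))) i.
have kn : (b 0)%:R != 0 :> rat by rewrite pnatr_eq0.
exists (m%:R * t0' / (b 0)%:R) => x.
have E1 := S_u_one i x.
have [E2 _] := Ho x.
have Ez : S u i x = 0 by rewrite -(odd_double_half i) oi add1n odd_zero.
rewrite Ez E2 /one in E1.
apply: (mulfI kn).
have -> : (b 0)%:R * S lr i x = m%:R * (t0' * 1).
  by apply/eqP; rewrite -subr_eq0 -E1.
by field.
Qed.
End Bip.

Lemma weight_sum D x :
  ((weight e D l x)%:R : rat) = \sum_(i < #|T| | D i) S lr i x.
Proof.
rewrite /weight natr_sum /S.
rewrite (exchange_big_dep (fun y => D (dist e x y))) /=; last first.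
  by move=> i y Di /eqP ->.
apply: eq_bigr => y Dy.
rewrite (big_pred1 (Ordinal (dist_lt x y))) // => i /=.
apply/andP/eqP => [[_ /eqP H]|->]; first by apply: val_inj; rewrite /= H.
by rewrite /= eqxx.
Qed.


Lemma sum_linear (D : pred nat) : b 0 != 0%N -> forall (r : seq 'I_#|T|),
  exists s, exists C, forall x, \sum_(i <- r | D i) S lr i x = s * lr x + C.
Proof.
move=> k0; elim=> [|i r [s [C IH]]].
  by exists 0, 0 => x; rewrite big_nil mul0r addr0.
have [s' [C' Hi]] := linear_form k0 i.
case Di: (D i).
  exists (s' + s), (C' + C) => x; rewrite big_cons Di Hi IH; ring.
by exists s, C => x; rewrite big_cons Di IH.
Qed.

Lemma sum_odd (A : {set T}) (hA : forall x y, e x y -> (x \in A) != (y \in A))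
  (D : pred nat) : b 0 != 0%N -> (forall i, D i -> odd i) -> forall (r : seq 'I_#|T|),
  exists C, forall x, \sum_(i <- r | D i) S lr i x = C.
Proof.
move=> k0 hD; elim=> [|i r [C IH]].
  by exists 0 => x; rewrite big_nil.
case Di: (D i).
  have [C' Hi] := odd_const hA k0 (hD _ Di).
  by exists (C' + C) => x; rewrite big_cons Di Hi IH.
by exists C => x; rewrite big_cons Di IH.
Qed.

End Dist.

Section Lab.
Context (T : finType).

Lemma lab_surj (l : T -> nat) : labeling l -> forall j, 1 <= j <= #|T| -> exists x, l x = j.
Proof.
move=> [linj lb] j /andP[j1 jN].
pose g (x : T) : 'I_#|T|.+1 := inord (l x).
have ginj : injective g.
  move=> x y /(congr1 (@nat_of_ord _)); rewrite /g !inordK; first exact: linj.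
  - by case/andP: (lb y).
  - by case/andP: (lb x).
have sub : [set g x | x in T] \subset [set~ ord0].
  apply/subsetP => _ /imsetP[x _ ->]; rewrite !inE; apply/negP => /eqP/(congr1 (@nat_of_ord _)).
  rewrite /g inordK /=; last by case/andP: (lb x).
  by case/andP: (lb x) => H _ E; rewrite E in H.
have eqS : [set g x | x in T] = [set~ ord0].
  apply/eqP; rewrite eqEcard sub cardsC1 card_ord /= card_imset //.
have : (inord j : 'I_#|T|.+1) \in [set~ ord0].
  rewrite !inE; apply/negP => /eqP/(congr1 (@nat_of_ord _)); rewrite inordK //=.
  by move=> E; rewrite E in j1.
rewrite -eqS => /imsetP[x _ /(congr1 (@nat_of_ord _))]; rewrite /g !inordK //; last by case/andP: (lb x).
by move=> E; exists x.
Qed.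

Lemma anti_gen (w phi : T -> nat) alpha delta :
  (forall x, w x = alpha + phi x * delta) -> 0 < delta -> injective phi ->
  (forall x, phi x < #|T|) -> (forall i, i < #|T| -> exists x, phi x = i) ->
  injective w /\ forall n, (exists x, w x = n) <-> (exists2 i, i < #|T| & n = alpha + i * delta).
Proof.
move=> hw d0 pinj plt psurj; split.
  move=> x y; rewrite !hw => /eqP; rewrite eqn_add2l eqn_mul2r eqn0Ngt d0 /= => /eqP.
  exact: pinj.
move=> n; split.
  by move=> [x <-]; exists (phi x); rewrite ?hw.
by move=> [i ilt ->]; have [x px] := psurj i ilt; exists x; rewrite hw px.
Qed.

Lemma natA (a b N : nat) : 1 <= a <= N -> 1 <= b <= N -> N - a = N - b -> a = b.
Proof. lia. Qed.
Lemma natB (a b N : nat) : 1 <= a <= N -> 1 <= b <= N -> a - 1 = b - 1 -> a = b.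
Proof. lia. Qed.
Lemma natC (a N : nat) : 1 <= a <= N -> N - a < N.
Proof. lia. Qed.
Lemma natD (a N : nat) : 1 <= a <= N -> a - 1 < N.
Proof. lia. Qed.
Lemma natE (i N : nat) : i < N -> 1 <= N - i <= N.
Proof. lia. Qed.
Lemma natF (i N : nat) : i < N -> N - (N - i) = i.
Proof. lia. Qed.
Lemma natG (i N : nat) : i < N -> 1 <= i.+1 <= N.
Proof. lia. Qed.

Lemma final (l w : T -> nat) (s C : rat) : labeling l -> 1 < #|T| ->
  (forall x, ((w x)%:R : rat) = (s * (l x)%:R + C)%R) ->
  (exists k, forall x, w x = k) \/ exists alpha, exists delta, 0 < delta /\ injective w /\
  forall n, (exists x, w x = n) <-> (exists2 i, i < #|T| & n = alpha + i * delta).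
Proof.
move=> lab N2 hw.
have [linj lb] := lab.
have [x1 l1] : exists x, l x = 1%N by apply: (lab_surj lab); rewrite leqnn ltnW.
have [x2 l2] : exists x, l x = 2%N by apply: (lab_surj lab); rewrite N2.
have [xN lN] : exists x, l x = #|T| by apply: (lab_surj lab); rewrite leqnn ltnW.
have es : (s = (w x2)%:R - (w x1)%:R)%R by rewrite !hw l1 l2; ring.
case: (ltrgtP s 0%R) => [sn|sp|s0].
- right; exists (w xN), (w x1 - w x2).
  have lt21 : w x2 < w x1.
    have : ((w x2)%:R - (w x1)%:R < 0 :> rat)%R by rewrite -es.
    by rewrite subr_lt0 ltr_nat.
  have ed : (((w x1 - w x2)%:R : rat) = - s)%R by rewrite natrB ?(ltnW lt21) // es opprB.
  split; first by rewrite subn_gt0.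
  apply: (anti_gen (phi := fun x => #|T| - l x)).
  + move=> x; apply/eqP; rewrite -(eqr_nat rat) natrD natrM ed natrB; last by case/andP: (lb x).
    by rewrite !hw lN; apply/eqP; ring.
  + by rewrite subn_gt0.
  + by move=> x y /= E; apply: linj; apply: natA (lb x) (lb y) E.
  + by move=> x /=; apply: natC (lb x).
  + move=> i ilt; have [x lx] : exists x, l x = #|T| - i by apply: (lab_surj lab); apply: natE.
    by exists x; rewrite lx natF.
- right; exists (w x1), (w x2 - w x1).
  have lt21 : w x1 < w x2.
    have : (0 < (w x2)%:R - (w x1)%:R :> rat)%R by rewrite -es.
    by rewrite subr_gt0 ltr_nat.
  have ed : (((w x2 - w x1)%:R : rat) = s)%R by rewrite natrB ?(ltnW lt21) // es.
  split; first by rewrite subn_gt0.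
  apply: (anti_gen (phi := fun x => l x - 1)).
  + move=> x; apply/eqP; rewrite -(eqr_nat rat) natrD natrM ed natrB; last by case/andP: (lb x).
    by rewrite !hw l1; apply/eqP; ring.
  + by rewrite subn_gt0.
  + by move=> x y /= E; apply: linj; apply: natB (lb x) (lb y) E.
  + by move=> x /=; apply: natD (lb x).
  + move=> i ilt; have [x lx] : exists x, l x = i.+1 by apply: (lab_surj lab); apply: natG.
    by exists x; rewrite lx subn1.
- left; exists (w x1) => x; apply/eqP; rewrite -(eqr_nat rat) !hw s0 !mul0r //.
Qed.

End Lab.

Theorem theorem2p6 (T : finType) (e : rel T) (l : T -> nat) :
  distance_regular e -> distance_magic e l ->
  (forall D : pred nat,
     (exists i, D i) -> (forall i, D i -> i <= diameter e) ->
     D_magic e D l \/ exists alpha delta, D_antimagic e D l alpha delta) /\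
  (bipartite e ->
   forall D : pred nat, (exists i, D i) -> (forall i, D i -> odd i) ->
     D_magic e D l).
Proof.
move=> [[sym irr] [conn [b [c hbc]]]] [lab [m hm]].
have [linj lb] := lab.
have const_magic : forall D, (forall x y, (((weight e D l x)%:R : rat) = (weight e D l y)%:R)%R) ->
    D_magic e D l.
  move=> D H; split => //; case: (pickP (fun _ : T => true)) => [x0 _|none].
    exists (weight e D l x0) => x; apply/eqP; rewrite -(eqr_nat rat) (H x x0) //.
  by exists 0%N => x; have := none x.
have [N1 | N2] := leqP #|T| 1.
  have alleq : forall x y : T, x = y.
    move=> x y; apply: linj; have := lb x; have := lb y.
    case/andP=> a1 a2; case/andP=> b1 b2; apply/eqP; rewrite eqn_leq.
    by rewrite (leq_trans (leq_trans a2 N1) b1) (leq_trans (leq_trans b2 N1) a1).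
  have H : forall D, D_magic e D l by move=> D; apply: const_magic => x y; rewrite (alleq x y).
  by split; [move=> D _ _; left; apply: H | move=> _ D _ _; apply: H].
have [x1 l1] : exists x, l x = 1%N by apply: (lab_surj lab); rewrite leqnn ltnW.
have [x2 l2] : exists x, l x = 2%N by apply: (lab_surj lab); rewrite N2.
have k0 : b 0 != 0%N.
  case E: (dist e x2 x1) => [|n].
    by move: (dist0 conn E) => E'; rewrite E' l2 in l1.
  have [z zx dz] := dist_pred conn E.
  apply/eqP => b0.
  have := card0_eq (etrans (deg_b0 irr conn hbc x1) b0) z.
  by rewrite !inE sym zx.
split.
  move=> D _ _.
  have [s [C H]] := sum_linear sym irr conn hbc hm D k0 (index_enum _).
  have hw : forall x, (((weight e D l x)%:R : rat) = s * (l x)%:R + C)%R.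
    by move=> x; rewrite weight_sum // H.
  case: (final lab N2 hw) => [[k hk]|[alpha [delta [d0 [winj hr]]]]].
    by left; split => //; exists k.
  by right; exists alpha, delta; split.
move=> [A hA] D _ hD.
have [C H] := sum_odd sym irr conn hbc hm hA k0 hD (index_enum _).
by apply: const_magic => x y; rewrite !weight_sum // !H.
Qed.
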